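(* Let $k\ge0$, $p\in[0,1]$, and fix sequences $\xi^x,\xi^y$. (i) Let $i_0\le i_1$ and $j$ be integers such that $H^y_{(k,j)}=0$ and $\sum_{i=i_0}^{i_1}H^x_{(k,i)}\le1$, and let $I=\bigcup_{i=i_0}^{i_1}I_{(k,i)}$. Then for every $k$-fractal set $S\subseteq I^y_{(k,j)}$, $$\mathbb{P}^{\xi^x,\xi^y}_p\big[\mathcal{R}_k(S,I)\text{ contains no }k\text{-fractal set}\big]\le(i_1-i_0+1)\max\{u_k(p),v_k(p)\}.$$ (ii) If $i_1-i_0\ge1$, $\sum_{i=i_0}^{i_1}H^x_{(k,i)}\le1$, $I=\bigcup_{i=i_0}^{i_1}I_{(k,i)}$ and $S$ is any $k$-fractal set (not necessarily $k$-grouped), then $$\mathbb{P}^{\xi^x,\xi^y}_p\big[\mathcal{R}_k(S,I)\text{ contains no }k\text{-grouped }k\text{-fractal set}\big]\le(i_1-i_0+1)\max\{u_k(p),v_k(p)\}.$$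
   Context: $L=10^6$, $L_k=L^k$, $M_k=\{k\}\times\mathbb{Z}$, $I_{(k,i)}=[iL_k,(i+1)L_k)\cap\mathbb{Z}$; for $m=(k+1,i)$, $\mathcal{Q}_m=\{(k,iL+j):0\le j\le L-1\}$. For a sequence $\xi=(\xi_i)_{i\in\mathbb{Z}}$ of nonnegative integers define labels $H_m$: $H_{(0,i)}=\xi_i$; for $m\in M_{k+1}$, $H_m=0$ if all $m'\in\mathcal{Q}_m$ are good, $H_m=H_{m_1}-1$ if $m_1$ is the unique bad element of $\mathcal{Q}_m$, and $H_m=1+\sum_{i=1}^rH_{m_i}$ if $m_1,\dots,m_r$ ($r\ge2$) are the bad elements of $\mathcal{Q}_m$; $m$ is good iff $H_m=0$, bad otherwise. $H^x_m,H^y_m$ are these labels computed from $\xi^x$, $\xi^y$; $I^x_m,I^y_m$ denote $I_m$ viewed horizontally/vertically. $\mathbb{P}^{\xi^x,\xi^y}_p$: independent bond percolation on $\mathbb{Z}^2$, edge $\{(i,j),(i+1,j)\}$ open with probability $p^{\xi^x_i+1}$, edge $\{(i,j),(i,j+1)\}$ open with probability $p^{\xi^y_j+1}$. For $S\subseteq\mathbb{Z}$, $Z_k(S)=\{m\in M_k:I_m\cap S\neq\emptyset\}$; $Z\prec Z'$ means $(k,i)\in Z,(k,j)\in Z'\Rightarrow i<j$; $S_1,\dots,S_n$ is $k$-ordered if $Z_k(S_1)\prec\dots\prec Z_k(S_n)$. $S$ is $k$-good if all $m\in Z_k(S)$ have $H^y_m=0$. $\{i\}$ is $0$-fractal iff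 $\xi^y_i=0$; for $k\ge1$, $S$ is $k$-fractal if $S=S_1\cup\dots\cup S_{2^{10}}$ with $S$ $k$-good, $(S_1,\dots,S_{2^{10}})$ $(k-1)$-ordered and each $S_i$ $(k-1)$-fractal. A $k$-fractal $S$ is $k$-grouped if $S\subseteq I_m$ for some $m\in M_k$. For a rectangle $R=[a,b)\times[c,d)$ (vertices $[a,b]\times[c,d]\cap\mathbb{Z}^2$, edges $\{z,w\}$, $|z-w|=1$, $z\in[a,b]\times[c,d]$, $w\in[a,b)\times[c,d)$), $\mathcal{R}(S,R)$ is the set of $y$ with $(b,y)\in\{b\}\times[c,d]$ joined to $\{a\}\times S$ by an open path in $R$. For a finite interval $I=[a,b)$, $\mathcal{R}_k(S,I)=\bigcup_{m'\in Z_k(S)}\mathcal{R}(S\cap I^y_{m'},I\times I^y_{m'})$. $u_k(p)=\sup\mathbb{P}^{\xi^x,\xi^y}_p[\mathcal{R}_k(S,I^x_m)$ contains no $k$-grouped $k$-fractal set$]$ over $S,m\in M_k,\xi^x,\xi^y$ with $S$ $k$-fractal and $H^x_m=0$. $v_k(p)=\sup\mathbb{P}^{\xi^x,\xi^y}_p[\mathcal{R}_k(S,I^x_m)$ contains no $k$-fractal set$]$ over $h\ge1$, $S$, $m\in M_k$, $\xi^x,\xi^y$ with $H^x_m=h$ and $S$ the union of a $k$-ordered family of $2^{4(h-1)}$ $k$-fractal sets. *)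

(* Defs.v *)
From mathcomp Require Import all_boot all_order all_algebra.
From mathcomp Require Import boolp classical_sets reals.
Set Implicit Arguments. Unset Strict Implicit. Unset Printing Implicit Defensive.
Import Order.TTheory GRing.Theory Num.Theory.
Local Open Scope classical_set_scope.
Local Open Scope ring_scope.

Definition Lb : nat := (10 ^ 6)%N.
Definition Lk (k : nat) : int := ((Lb ^ k)%N)%:Z.

Definition Iblock (k : nat) (i : int) : set int :=
  [set x | i * Lk k <= x < (i + 1) * Lk k].

Fixpoint H (xi : int -> nat) (k : nat) (i : int) : nat :=
  match k with
  | 0 => xi i
  | k'.+1 =>
      let bads := [seq j <- iota 0 Lb | H xi k' (i * Lb%:Z + j%:Z) != 0%N] in
      match bads with
      | [::] => 0%N
      | [:: j] => (H xi k' (i * Lb%:Z + j%:Z)).-1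
      | _ => (1 + \sum_(j <- bads) H xi k' (i * Lb%:Z + j%:Z))%N
      end
  end.

(* Z_k(S) as a set of indices i (standing for m = (k,i)) *)
Definition Zk (k : nat) (S : set int) : set int :=
  [set i | exists2 s, S s & Iblock k i s].

Definition prec (Z Z' : set int) : Prop := forall i j, Z i -> Z' j -> i < j.

Definition kordered (k : nat) (F : nat -> set int) (n : nat) : Prop :=
  forall t, (t.+1 < n)%N -> prec (Zk k (F t)) (Zk k (F t.+1)).

Definition family_union (F : nat -> set int) (n : nat) : set int :=
  [set x | exists2 t, (t < n)%N & F t x].

Definition kgood (xiy : int -> nat) (k : nat) (S : set int) : Prop :=
  forall i, Zk k S i -> H xiy k i = 0%N.

Fixpoint fractal (xiy : int -> nat) (k : nat) (S : set int) : Prop :=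
  match k with
  | 0 => exists i, S = [set i]%classic /\ xiy i = 0%N
  | k'.+1 => kgood xiy k S /\
      exists F : nat -> set int,
        S = family_union F (2 ^ 10) /\ kordered k' F (2 ^ 10) /\
        (forall t, (t < 2 ^ 10)%N -> fractal xiy k' (F t))
  end.

Definition grouped (k : nat) (S : set int) : Prop :=
  exists i, S `<=` Iblock k i.

(* edge (false, i, j) = {(i,j),(i+1,j)} (horizontal);
   edge (true, i, j)  = {(i,j),(i,j+1)} (vertical). *)
Definition edge := (bool * int * int)%type.
Definition config := edge -> bool.

Definition open_step (om : config) (z w : int * int) : bool :=
  [|| (w == (z.1 + 1, z.2)) && om (false, z.1, z.2),
      (z == (w.1 + 1, w.2)) && om (false, w.1, w.2),
      (w == (z.1, z.2 + 1)) && om (true, z.1, z.2)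
    | (z == (w.1, w.2 + 1)) && om (true, w.1, w.2)].

(* rectangle R = [a,b) x [c,d): closed vertex box and half-open box *)
Definition in_closed (a b c d : int) (z : int * int) : bool :=
  (a <= z.1 <= b) && (c <= z.2 <= d).
Definition in_half (a b c d : int) (z : int * int) : bool :=
  (a <= z.1 < b) && (c <= z.2 < d).
Definition edge_in_rect (a b c d : int) (z w : int * int) : bool :=
  (in_closed a b c d z && in_half a b c d w) ||
  (in_closed a b c d w && in_half a b c d z).

Definition Reach (om : config) (S : set int) (a b c d : int) : set int :=
  [set y | c <= y <= d /\
     exists (v0 : int * int) (s : seq (int * int)),
       [/\ v0.1 = a, S v0.2, last v0 s = (b, y) &
           path (fun z w => open_step om z w && edge_in_rect a b c d z w) v0 s]].

Definition Rk (om : config) (k : nat) (S : set int) (a b : int) : set int :=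
  [set y | exists2 j, Zk k S j &
     Reach om (S `&` Iblock k j) a b (j * Lk k) ((j + 1) * Lk k) y].

Section Prob.
Variable R : realType.

Definition q_open (p : R) (xix xiy : int -> nat) (e : edge) : R :=
  if e.1.1 then p ^+ (xiy e.2).+1 else p ^+ (xix e.1.2).+1.

Definition depends_only (A : config -> Prop) (E : seq edge) : Prop :=
  forall om om', (forall e, e \in E -> om e = om' e) -> (A om <-> A om').

Definition cyl_prob (p : R) (xix xiy : int -> nat) (E : seq edge)
    (A : config -> Prop) : R :=
  \sum_(b : (size E).-tuple bool)
     (\prod_(t < size E)
        (if tnth b t then q_open p xix xiy (nth (false, 0, 0) E t)
         else 1 - q_open p xix xiy (nth (false, 0, 0) E t))) *
     (if `[< A (fun e => nth false b (index e E)) >] then 1 else 0).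

(* P_p^{xix,xiy}[A] for an event A depending on finitely many edges
   (all finite-dimensional marginals agree, so the sup is that common value). *)
Definition percP (p : R) (xix xiy : int -> nat) (A : config -> Prop) : R :=
  sup [set v | exists E : seq edge,
         [/\ uniq E, depends_only A E & v = cyl_prob p xix xiy E A]].

Definition no_fractal (xiy : int -> nat) (k : nat) (S : set int) (a b : int)
    (om : config) : Prop :=
  ~ exists T, fractal xiy k T /\ T `<=` Rk om k S a b.
Definition no_grouped_fractal (xiy : int -> nat) (k : nat) (S : set int)
    (a b : int) (om : config) : Prop :=
  ~ exists T, [/\ fractal xiy k T, grouped k T & T `<=` Rk om k S a b].

Definition u_k (k : nat) (p : R) : R :=
  sup [set v | exists (S : set int) (m : int) (xix xiy : int -> nat),
        [/\ fractal xiy k S, H xix k m = 0%N &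
            v = percP p xix xiy
                  (no_grouped_fractal xiy k S (m * Lk k) ((m + 1) * Lk k))]].

Definition v_k (k : nat) (p : R) : R :=
  sup [set v | exists (h : nat) (S : set int) (m : int) (xix xiy : int -> nat)
                      (F : nat -> set int),
        [/\ (1 <= h)%N, H xix k m = h,
            S = family_union F (2 ^ (4 * (h - 1))),
            kordered k F (2 ^ (4 * (h - 1))) /\
            (forall t, (t < 2 ^ (4 * (h - 1)))%N -> fractal xiy k (F t)) &
            v = percP p xix xiy
                  (no_fractal xiy k S (m * Lk k) ((m + 1) * Lk k))]].

End Prob.

(* Main.v *)
Require Import Defs.
From mathcomp Require Import all_boot all_order all_algebra.
From mathcomp Require Import boolp classical_sets reals.
From mathcomp Require Import zify ring lra.
Import Order.TTheory GRing.Theory Num.Theory.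
Local Open Scope classical_set_scope.
Local Open Scope ring_scope.

Module Aux.

Definition upd (om : config) (e : edge) (x : bool) : config :=
  fun e' => if e' == e then x else om e'.

Section PbSec.
Variables (R : realType) (p : R) (xix xiy : int -> nat).
Let q := q_open p xix xiy.

Fixpoint Pb (E : seq edge) (f : config -> R) (om : config) : R :=
  match E with
  | [::] => f om
  | e :: E' => q e * Pb E' f (upd om e true) + (1 - q e) * Pb E' f (upd om e false)
  end.

Lemma Pb_cat E1 E2 f om :
  Pb (E1 ++ E2) f om = Pb E1 (fun om' => Pb E2 f om') om.
Proof. by elim: E1 om => [|e E IH] om //=; rewrite !IH. Qed.

Lemma upd_upd_same om e x y : upd (upd om e x) e y = upd om e y.
Proof. by apply: funext => e'; rewrite /upd; case: eqP. Qed.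

Lemma upd_comm om e e' x y : e != e' ->
  upd (upd om e x) e' y = upd (upd om e' y) e x.
Proof.
move=> ne; apply: funext => z; rewrite /upd.
case: (eqVneq z e') => [->|_]; last by [].
by rewrite eq_sym (negbTE ne).
Qed.

Lemma Pb_base_inv E f e x om :
  (forall om' y, f (upd om' e y) = f om') ->
  Pb E f (upd om e x) = Pb E f om.
Proof.
move=> hf; elim: E om => [|e' E IH] om /=; first by rewrite hf.
case: (eqVneq e e') => [<-|ne]; first by rewrite !upd_upd_same.
by rewrite !(upd_comm _ _ _ _ _ ne) !IH.
Qed.

Definition dep_on (f : config -> R) (D : seq edge) :=
  forall om om', (forall e, e \in D -> om e = om' e) -> f om = f om'.

Lemma Pb_filter E f D om : dep_on f D ->
  Pb E f om = Pb [seq e <- E | e \in D] f om.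
Proof.
move=> hf; elim: E om => [|e E IH] om //=.
case: ifP => eD /=; first by rewrite !IH.
have inv : forall om' y, f (upd om' e y) = f om'.
  move=> om' y; apply: hf => e' e'D; rewrite /upd; case: eqP => // h.
  by rewrite -h e'D in eD.
rewrite !Pb_base_inv // IH; ring.
Qed.

Lemma Pb_front E f e om : uniq E -> e \in E ->
  Pb E f om = Pb (e :: rem e E) f om.
Proof.
elim: E om => [|e' E IH] om //= /andP[e'E uE].
rewrite in_cons; case: (eqVneq e e') => [<-|ne] /= He; first by [].
rewrite !IH //=.
rewrite !(upd_comm _ _ _ _ _ ne); ring.
Qed.

Lemma Pb_perm E E' f om : uniq E -> perm_eq E E' -> Pb E f om = Pb E' f om.
Proof.
elim: E E' om => [|e E IH] E' om.
  by move=> _; rewrite perm_sym => /perm_nilP ->.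
move=> uE pE.
have eE' : e \in E' by rewrite -(perm_mem pE) mem_head.
have uE' : uniq E' by rewrite -(perm_uniq pE).
rewrite (Pb_front E' f e om uE' eE') /=.
have pE1 : perm_eq E (rem e E').
  by rewrite -(perm_cons e); apply: (perm_trans pE); apply: perm_to_rem.
by move: uE => /= /andP[_ uE]; rewrite !(IH (rem e E')).
Qed.

Lemma Pb_indep E E' f om : uniq E -> uniq E' -> dep_on f E -> dep_on f E' ->
  Pb E f om = Pb E' f om.
Proof.
move=> uE uE' hE hE'.
rewrite (Pb_filter E f E' om hE') (Pb_filter E' f E om hE).
apply: Pb_perm; first exact: filter_uniq.
apply: uniq_perm; try exact: filter_uniq.
by move=> e; rewrite !mem_filter andbC.
Qed.

Lemma Pb_const E c om : Pb E (fun _ => c) om = c.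
Proof. by elim: E om => [|e E IH] om //=; rewrite !IH; ring. Qed.

Lemma Pb_addc E f c om : Pb E (fun o => f o + c) om = Pb E f om + c.
Proof. by elim: E om => [|e E IH] om //=; rewrite !IH; ring. Qed.

Lemma Pb_base_agree E f D om om' : dep_on f D ->
  (forall e, e \in D -> e \notin E -> om e = om' e) -> Pb E f om = Pb E f om'.
Proof.
move=> hf; elim: E om om' => [|e E IH] om om' hag /=.
  by apply: hf => e eD; apply: hag.
congr (_ * _ + _ * _); apply: IH => e' e'D e'E; rewrite /upd; case: eqP => // ne.
  by apply: hag; rewrite // in_cons negb_or e'E andbT; apply/eqP.
by apply: hag; rewrite // in_cons negb_or e'E andbT; apply/eqP.
Qed.

Hypothesis p01 : 0 <= p <= 1.

Lemma q01 e : 0 <= q e <= 1.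
Proof.
case/andP: p01 => p0 p1; rewrite /q /q_open; case: ifP => _;
by rewrite exprn_ge0 ?exprn_ile1.
Qed.

Lemma Pb_mono E f g om :
  (forall o, (forall e, e \notin E -> o e = om e) -> f o <= g o) ->
  Pb E f om <= Pb E g om.
Proof.
elim: E om => [|e E IH] om hfg /=.
  by apply: hfg.
have [q0 q1] := andP (q01 e).
have h : forall x, Pb E f (upd om e x) <= Pb E g (upd om e x).
  move=> x; apply: IH => o ho; apply: hfg => e' e'n.
  move: e'n; rewrite in_cons negb_or => /andP[ne e'E].
  by rewrite ho // /upd (negbTE ne).
apply: lerD; apply: ler_wpM2l => //; first by rewrite subr_ge0.
Qed.

Lemma Pb_01 E f om : (forall o, 0 <= f o <= 1) -> 0 <= Pb E f om <= 1.
Proof.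
move=> hf; elim: E om => [|e E IH] om //=.
have [q0 q1] := andP (q01 e).
have [a0 a1] := andP (IH (upd om e true)).
have [b0 b1] := andP (IH (upd om e false)).
apply/andP; split; first by rewrite addr_ge0 // mulr_ge0 // subr_ge0.
nra.
Qed.

End PbSec.
Arguments Pb {R}.
Arguments dep_on {R}.

Lemma sum_tuple_cons (R : realType) n (F : n.+1.-tuple bool -> R) :
  \sum_(b : n.+1.-tuple bool) F b =
  \sum_(x : bool) \sum_(b : n.-tuple bool) F [tuple of x :: b].
Proof.
rewrite pair_big /=.
rewrite (reindex (fun xb : bool * n.-tuple bool => [tuple of xb.1 :: xb.2])) //=.
exists (fun b : n.+1.-tuple bool => (thead b, [tuple of behead b])).
  by move=> [x b] _ /=; congr pair; apply: val_inj.
by move=> b _; apply: val_inj => /=; case: b => [[|x s] //=].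
Qed.

Definition cfg (E : seq edge) (b : seq bool) (om : config) : config :=
  fun e => if e \in E then nth false b (index e E) else om e.

Lemma cyl_Pb_gen (R : realType) (p : R) xix xiy (g : config -> R) E om :
  uniq E ->
  \sum_(b : (size E).-tuple bool)
     (\prod_(t < size E)
        (if tnth b t then q_open p xix xiy (nth (false, 0, 0) E t)
         else 1 - q_open p xix xiy (nth (false, 0, 0) E t))) * g (cfg E b om)
  = Pb p xix xiy E g om.
Proof.
elim: E om => [|e E IH] om /=.
  rewrite (eq_bigl (pred1 [tuple])); last by move=> t; symmetry; apply/eqP; exact: tuple0.
  by rewrite big_pred1_eq big_ord0 mul1r.
move=> /andP[eE uE].
rewrite sum_tuple_cons big_bool /=.
rewrite -!IH //.
rewrite !mulr_sumr; congr (_ + _); apply: eq_bigr => b _;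
  rewrite big_ord_recl /= mulrA; congr (_ * _ * _).
all: try (apply: eq_bigr => t _; rewrite !(tnth_nth false) //=).
all: f_equal; apply: funext => e' ; rewrite /cfg /upd in_cons;
  case: (eqVneq e' e) => [->|ne] /=; rewrite ?(negbTE eE) ?eqxx //;
  rewrite eq_sym (negbTE ne) //.
Qed.

Definition ind {R : realType} (A : config -> Prop) : config -> R :=
  fun om => if `[< A om >] then 1 else 0.

Definition ofalse : config := fun _ => false.

Lemma cyl_Pb (R : realType) (p : R) xix xiy E A : uniq E ->
  cyl_prob p xix xiy E A = Pb p xix xiy E (ind A) ofalse.
Proof.
move=> uE; rewrite /cyl_prob -(cyl_Pb_gen _ p xix xiy (ind A) E ofalse uE).
apply: eq_bigr => b _; congr (_ * _); rewrite /ind /cfg.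
have -> : (fun e => if e \in E then nth false b (index e E) else ofalse e) =
          (fun e => nth false b (index e E)) => //.
apply: funext => e; case: ifP => // eE.
by rewrite nth_default // memNindex ?eE // size_tuple.
Qed.

Lemma dep_ind (R : realType) A E : depends_only A E -> dep_on (@ind R A) E.
Proof.
move=> hA om om' hag; rewrite /ind.
have := hA om om' hag.
by case: asboolP => h1; case: asboolP => h2 // [h3 h4]; [case: h2; apply: h3|case: h1; apply: h4].
Qed.

Lemma percP_eq (R : realType) (p : R) xix xiy E A : uniq E -> depends_only A E ->
  percP p xix xiy A = Pb p xix xiy E (ind A) ofalse.
Proof.
move=> uE hA; rewrite /percP.
have -> : [set v | exists E0 : seq edge,
         [/\ uniq E0, depends_only A E0 & v = cyl_prob p xix xiy E0 A]] =
          [set Pb p xix xiy E (ind A) ofalse].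
  apply: funext => v; apply: propext; split.
    move=> [E0 [uE0 hA0 ->]]; rewrite cyl_Pb //.
    by apply: Pb_indep => //; apply: dep_ind.
  by move=> ->; exists E; split => //; rewrite cyl_Pb.
by rewrite sup1.
Qed.

Lemma sup01 (R : realType) (S : set R) : (forall x, S x -> 0 <= x <= 1) ->
  0 <= sup S <= 1.
Proof.
move=> h; case: (pselect (S !=set0)) => [[x Sx]|ne].
  have ub : has_ubound S by exists 1 => y Sy; case/andP: (h y Sy).
  have := ub_le_sup ub Sx; case/andP: (h x Sx) => x0 _ xs.
  apply/andP; split; first exact: le_trans xs.
  by apply: ge_sup; [exists x | move=> y Sy; case/andP: (h y Sy)].
have -> : S = set0 by apply/seteqP; split => // y Sy; case: ne; exists y.
by rewrite sup0 lexx ler01.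
Qed.

Lemma sup_ge1 (R : realType) (S : set R) x : (forall y, S y -> y <= 1) -> S x ->
  x <= sup S.
Proof. by move=> h Sx; apply: ub_le_sup => //; exists 1. Qed.

Lemma percP01 (R : realType) (p : R) xix xiy A : 0 <= p <= 1 ->
  0 <= percP p xix xiy A <= 1.
Proof.
move=> p01; apply: sup01 => v [E [uE hA ->]]; rewrite cyl_Pb //.
by apply: Pb_01 => // o; rewrite /ind; case: asboolP; rewrite ?lexx ?ler01.
Qed.

Lemma ind01 (R : realType) A o : 0 <= @ind R A o <= 1.
Proof. by rewrite /ind; case: asboolP; rewrite ?lexx ?ler01. Qed.

Lemma step_lemma (R : realType) (p : R) xix xiy E1 E2 (A B : config -> Prop) c :
  0 <= p <= 1 ->
  uniq (E1 ++ E2) -> depends_only A (E1 ++ E2) -> depends_only B E1 -> 0 <= c ->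
  (forall w1, ~ B w1 -> exists A' : config -> Prop,
     [/\ depends_only A' E2, percP p xix xiy A' <= c &
         forall w, (forall e, e \in E1 -> w e = w1 e) -> A w -> A' w]) ->
  percP p xix xiy A <= percP p xix xiy B + c.
Proof.
move=> p01 u12 hA hB c0 hstep.
have u12' := u12; rewrite cat_uniq in u12'; case/and3P: u12' => uE1 dis uE2.
have dis' : forall e, e \in E1 -> e \notin E2.
  by move=> e eE1; apply/negP => eE2; move/hasPn: dis => /(_ e eE2); rewrite eE1.
rewrite (percP_eq _ p xix xiy _ _ u12 hA) (percP_eq _ p xix xiy _ _ uE1 hB) Pb_cat -Pb_addc.
apply: Pb_mono => // w1 _.
case: (pselect (B w1)) => hB1.
  rewrite /ind asboolT //.
  have := Pb_01 _ p xix xiy p01 E2 (ind A) w1 (ind01 _ A).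
  by case/andP => _ h; apply: (le_trans h); rewrite lerDl.
have [A' [hA' hc himp]] := hstep w1 hB1.
rewrite /ind (asboolF hB1) add0r.
apply: le_trans hc.
rewrite (percP_eq _ p xix xiy _ _ uE2 hA').
rewrite -(Pb_base_agree _ p xix xiy E2 (ind A') E2 w1 ofalse (dep_ind _ _ _ hA')); last first.
  by move=> e eE2; rewrite eE2.
apply: Pb_mono => // o ho.
rewrite /ind; case: asboolP => hAo; last by case: asboolP; rewrite ?lexx ?ler01.
rewrite asboolT //; apply: himp hAo => e eE1; apply: ho; exact: dis'.
Qed.

Lemma percP_mono (R : realType) (p : R) xix xiy E (A A' : config -> Prop) :
  0 <= p <= 1 -> uniq E -> depends_only A E -> depends_only A' E ->
  (forall w, A w -> A' w) -> percP p xix xiy A <= percP p xix xiy A'.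
Proof.
move=> p01 uE hA hA' himp.
rewrite (percP_eq _ p xix xiy _ _ uE hA) (percP_eq _ p xix xiy _ _ uE hA').
apply: Pb_mono => // o _; rewrite /ind; case: asboolP => h.
  by rewrite asboolT ?lexx //; apply: himp.
by case: asboolP; rewrite ?lexx ?ler01.
Qed.

Set Implicit Arguments. Unset Strict Implicit.

Definition irng (a b : int) : seq int :=
  if a <= b then [seq a + i%:Z | i <- iota 0 (absz (b - a))] else [::].

Lemma mem_irng a b y : (y \in irng a b) = (a <= y < b).
Proof.
rewrite /irng; case: ifP => ab; last first.
  by rewrite in_nil; apply/esym/negbTE; apply/negP => /andP[h1 h2]; lia.
apply/mapP/idP.
  by move=> [i]; rewrite mem_iota add0n => hi ->; lia.
move=> /andP[h1 h2]; exists (absz (y - a)); last by lia.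
by rewrite mem_iota add0n; lia.
Qed.

Lemma irng_uniq a b : uniq (irng a b).
Proof.
rewrite /irng; case: ifP => // _; rewrite map_inj_uniq ?iota_uniq //.
by move=> i j /addrI [].
Qed.

Definition Eset (a b C D : int) : seq edge :=
  [seq (false, x, y) | x <- irng a b, y <- irng C (D + 1)] ++
  [seq (true, x, y) | x <- irng a b, y <- irng C D].

Lemma mem_Eset a b C D (d : bool) x y :
  ((d, x, y) \in Eset a b C D) =
  [&& a <= x < b, C <= y & (if d then y < D else y <= D)].
Proof.
rewrite mem_cat; apply/orP/idP.
  case=> /allpairsP [[x' y'] /= [hx hy [-> -> ->]]];
  move: hx hy; rewrite !mem_irng => /andP[? ?] /andP[? ?];
  apply/and3P; split => //; try (apply/andP; split => //); lia.
case/and3P => /andP[h1 h2] h3; case: d => h4.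
  by right; apply/allpairsP; exists (x, y) => /=; rewrite !mem_irng; split => //; apply/andP; split.
left; apply/allpairsP; exists (x, y) => /=; rewrite !mem_irng; split => //;
  apply/andP; split => //; lia.
Qed.

Lemma Eset_uniq a b C D : uniq (Eset a b C D).
Proof.
rewrite cat_uniq; apply/and3P; split.
- rewrite allpairs_uniq ?irng_uniq //.
  by move=> [x y] [x' y'] _ _ /= [-> ->].
- apply/hasPn => -[[d x] y] /allpairsP [[x' y'] /= [_ _ [-> -> ->]]].
  by apply/negP => /allpairsP [[? ?] /= [_ _ []]].
- rewrite allpairs_uniq ?irng_uniq //.
  by move=> [x y] [x' y'] _ _ /= [-> ->].
Qed.

Definition rel (om : config) (a b c d : int) (z w : int * int) : bool :=
  open_step om z w && edge_in_rect a b c d z w.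

Lemma rel_agree om om' a b c d C D : C <= c -> d <= D ->
  (forall e, e \in Eset a b C D -> om e = om' e) ->
  forall z w, rel om a b c d z w = rel om' a b c d z w.
Proof.
move=> hc hd hag [z1 z2] [w1 w2]; rewrite /rel.
case hE: edge_in_rect; rewrite ?andbF ?andbT //.
move: hE; rewrite /edge_in_rect /in_closed /in_half /= => hE.
have H : [/\ a <= z1 <= b, c <= z2 <= d, a <= w1 <= b & c <= w2 <= d] /\
         ((z1 < b /\ z2 < d) \/ (w1 < b /\ w2 < d)).
  case/orP: hE => /andP[/andP[/andP[h1 h2] /andP[h3 h4]] /andP[/andP[h5 h6] /andP[h7 h8]]];
  (split; [split; apply/andP; split; lia | lia]).
case: H => [[/andP[? ?] /andP[? ?] /andP[? ?] /andP[? ?]] H].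
rewrite /open_step /=.
congr (_ || (_ || (_ || _))); case: eqP => // -[h1 h2]; rewrite hag //;
  rewrite mem_Eset; apply/and3P; split; try (apply/andP; split); lia.
Qed.

Lemma Reach_agree om om' S a b c d C D : C <= c -> d <= D ->
  (forall e, e \in Eset a b C D -> om e = om' e) ->
  Reach om S a b c d = Reach om' S a b c d.
Proof.
move=> hc hd hag.
have E := rel_agree hc hd hag.
apply: funext => y; apply: propext; rewrite /Reach; split;
  move=> [hy [v0 [s [h1 h2 h3 h4]]]]; split => //; exists v0, s; split => //.
  by rewrite -(eq_path E).
by rewrite (eq_path E).
Qed.

Definition Rows (k : nat) (S : set int) (C D : int) : Prop :=
  C <= D /\ forall j, Zk k S j -> C <= j * Lk k /\ (j + 1) * Lk k <= D.

Lemma Rk_agree om om' k S a b C D : Rows k S C D ->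
  (forall e, e \in Eset a b C D -> om e = om' e) ->
  Rk om k S a b = Rk om' k S a b.
Proof.
move=> [_ hR] hag; apply: funext => y; apply: propext; rewrite /Rk; split;
  move=> [j hj hr]; exists j => //; have [h1 h2] := hR j hj.
  by rewrite -(Reach_agree _ h1 h2 hag).
by rewrite (Reach_agree _ h1 h2 hag).
Qed.

Lemma dep_sub (A : config -> Prop) E E' : depends_only A E ->
  (forall e, e \in E -> e \in E') -> depends_only A E'.
Proof. by move=> hA sub om om' hag; apply: hA => e eE; apply: hag; apply: sub. Qed.

Lemma nf_dep xiy k S a b C D : Rows k S C D ->
  depends_only (no_fractal xiy k S a b) (Eset a b C D).
Proof.
move=> hR om om' hag; rewrite /no_fractal (Rk_agree hR hag); split => //.
Qed.

Lemma ng_dep xiy k S a b C D : Rows k S C D ->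
  depends_only (no_grouped_fractal xiy k S a b) (Eset a b C D).
Proof.
move=> hR om om' hag; rewrite /no_grouped_fractal (Rk_agree hR hag); split => //.
Qed.

Lemma Eset_split a m b C D e : a <= m <= b ->
  e \in Eset a b C D -> e \in Eset a m C D ++ Eset m b C D.
Proof.
move=> /andP[h1 h2]; case: e => [[d x] y]; rewrite mem_Eset.
case/and3P => /andP[h3 h4] h5 h6; rewrite mem_cat !mem_Eset.
case: (ltrP x m) => hxm; [apply/orP; left | apply/orP; right];
  apply/and3P; split => //; apply/andP; split => //; lia.
Qed.

Lemma Eset_cat_uniq a m b C D : uniq (Eset a m C D ++ Eset m b C D).
Proof.
rewrite cat_uniq !Eset_uniq andbT /=; apply/hasPn => -[[d x] y].
rewrite !mem_Eset => /and3P[/andP[h1 h2] _ _]; apply/negP => /and3P[/andP[h3 h4] _ _].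
lia.
Qed.

Lemma Reach_lt om S a b c d y : (forall s, S s -> s < d) ->
  Reach om S a b c d y -> y < d.
Proof.
move=> hS [/andP[hy1 hy2] [v0 [s [h1 h2 h3 h4]]]].
case/lastP: s h3 h4 => [|s' w] /=.
  by move=> h3; move: h2; rewrite h3 /= => /hS.
rewrite last_rcons rcons_path => -> /andP[_].
case: (last v0 s') => z1 z2.
rewrite lt_neqAle hy2 andbT; apply: contraTneq => ->.
rewrite /open_step /edge_in_rect /in_closed /in_half /=.
apply/negP => /andP[ho hr].
have hh : ~~ ((c <= d) && (d < d)) by rewrite ltxx andbF.
move: hr; rewrite (negbTE hh) !andbF /= => /andP[/andP[/andP[? ?] /andP[? ?]] /andP[/andP[? ?] /andP[? ?]]].
case/or4P: ho => /andP[/eqP [] ? ? _]; lia.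
Qed.

Lemma Lk_gt0 k : 0 < Lk k.
Proof. by rewrite /Lk ltz_nat expn_gt0. Qed.

Lemma Iblock_uniq k j j' t : Iblock k j t -> Iblock k j' t -> j = j'.
Proof.
rewrite /Iblock /= => /andP[h1 h2] /andP[h3 h4].
have L0 := Lk_gt0 k.
case: (ltgtP j j') => // h.
  have : (j + 1) * Lk k <= j' * Lk k by rewrite ler_pM2r //; lia.
  lia.
have : (j' + 1) * Lk k <= j * Lk k by rewrite ler_pM2r //; lia.
lia.
Qed.

Lemma eir_mono a b a' b' c d z w : a' <= a -> b <= b' ->
  edge_in_rect a b c d z w -> edge_in_rect a' b' c d z w.
Proof.
move=> ha hb; rewrite /edge_in_rect /in_closed /in_half.
case/orP => /andP[/andP[/andP[? ?] /andP[? ?]] /andP[/andP[? ?] /andP[? ?]]];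
  apply/orP; [left|right]; repeat (apply/andP; split); lia.
Qed.

Lemma Reach_cat om S S' a m b c d y : a <= m -> m <= b ->
  (forall s, S' s -> Reach om S a m c d s) ->
  Reach om S' m b c d y -> Reach om S a b c d y.
Proof.
move=> am mb hS' [hy [v0 [s [h1 h2 h3 h4]]]].
have [_ [u0 [s1 [g1 g2 g3 g4]]]] := hS' _ h2.
split => //; exists u0, (s1 ++ s); split => //.
  by rewrite last_cat g3 -h1 -surjective_pairing.
rewrite cat_path; apply/andP; split.
  apply: sub_path g4 => z w /andP[-> /=]; apply: eir_mono => //; lia.
rewrite g3 -h1 -surjective_pairing.
apply: sub_path h4 => z w /andP[-> /=]; apply: eir_mono => //; lia.
Qed.

Lemma Reach_block om k S j a b y :
  Reach om (S `&` Iblock k j) a b (j * Lk k) ((j + 1) * Lk k) y -> Iblock k j y.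
Proof.
move=> hR.
have h : y < (j + 1) * Lk k.
  by apply: Reach_lt hR => s [_ /andP[]].
by case: hR => /andP[h1 _] _; rewrite /Iblock /= h1 h.
Qed.

Lemma Rk_block om k S a b y : Rk om k S a b y -> exists2 j, Zk k S j & Iblock k j y.
Proof. by move=> [j hj hR]; exists j => //; apply: Reach_block hR. Qed.

Lemma Zk_sub om k S T a b : T `<=` Rk om k S a b -> Zk k T `<=` Zk k S.
Proof.
move=> hT j [t Tt hb]; have [j' hj' hb'] := Rk_block (hT _ Tt).
by rewrite (Iblock_uniq hb hb').
Qed.

Lemma Rows_sub om k S T a b C D : T `<=` Rk om k S a b -> Rows k S C D -> Rows k T C D.
Proof. by move=> hT [hCD hR]; split => // j /(Zk_sub hT) /hR. Qed.

Lemma Rk_cat om k S T a m b : a <= m -> m <= b ->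
  T `<=` Rk om k S a m -> Rk om k T m b `<=` Rk om k S a b.
Proof.
move=> am mb hT y [j hj hR]; exists j; first exact: (Zk_sub hT).
apply: Reach_cat am mb _ hR => s [Ts bs].
have [j' hj' hR'] := hT _ Ts.
by have := Reach_block hR' => /(Iblock_uniq bs) ->.
Qed.

Lemma Rk_grouped om k S a b j0 : S `<=` Iblock k j0 -> Rk om k S a b `<=` Iblock k j0.
Proof.
move=> hS y /Rk_block [j [s Ss bs] hb].
by have := Iblock_uniq bs (hS _ Ss) => <-.
Qed.

Lemma family_bounded (F : nat -> set int) n :
  (forall t, (t < n)%N -> exists r : int, 0 <= r /\ forall s, F t s -> - r <= s <= r) ->
  exists r : int, 0 <= r /\ forall s, family_union F n s -> - r <= s <= r.
Proof.
elim: n => [|n IH] h.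
  by exists 0; split => // s [t].
have [r1 [r10 h1]] := IH (fun t ht => h t (ltnW ht)).
have [r2 [r20 h2]] := h n (ltnSn n).
exists (r1 + r2); split; first lia.
move=> s [t]; rewrite ltnS leq_eqVlt => /orP[/eqP -> /h2|ht hs].
  by move=> /andP[? ?]; lia.
have /andP[? ?] := h1 s (ex_intro2 _ _ t ht hs); lia.
Qed.

Lemma fractal_bounded xiy k S : fractal xiy k S ->
  exists r : int, 0 <= r /\ forall s, S s -> - r <= s <= r.
Proof.
elim: k S => [|k IH] S /=.
  move=> [i [-> _]]; exists `|i|; split => // s ->; lia.
move=> [_ [F [-> [_ hF]]]]; apply: family_bounded => t ht; exact: IH (hF t ht).
Qed.

Lemma Rows_fractal xiy k S : fractal xiy k S -> exists C D, Rows k S C D.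
Proof.
move=> /fractal_bounded [r [r0 hr]]; exists (- r - Lk k), (r + Lk k).
have L0 := Lk_gt0 k; split; first lia.
move=> j [s Ss /andP[h1 h2]]; have /andP[? ?] := hr s Ss.
rewrite mulrDl mul1r in h2 *; lia.
Qed.

Section Main.
Variables (R : realType) (p : R) (xix xiy : int -> nat) (k : nat).
Hypothesis p01 : 0 <= p <= 1.

Let L := Lk k.

Definition ev (g : bool) S a b : config -> Prop :=
  if g then no_grouped_fractal xiy k S a b else no_fractal xiy k S a b.

Lemma ev_dep g S a b C D : Rows k S C D -> depends_only (ev g S a b) (Eset a b C D).
Proof. by case: g => /=; [apply: ng_dep | apply: nf_dep]. Qed.

Lemma u01 : 0 <= u_k k p <= 1.
Proof.
apply: sup01 => v [S [m [xix' [xiy' [_ _ ->]]]]]; exact: percP01.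
Qed.

Lemma v01 : 0 <= v_k k p <= 1.
Proof.
apply: sup01 => v [h [S [m [xix' [xiy' [F [_ _ _ _ ->]]]]]]]; exact: percP01.
Qed.

Lemma u_ge S m : fractal xiy k S -> H xix k m = 0%N ->
  percP p xix xiy (no_grouped_fractal xiy k S (m * Lk k) ((m + 1) * Lk k)) <= u_k k p.
Proof.
move=> hS hm; apply: sup_ge1.
  by move=> v [S' [m' [xix' [xiy' [_ _ ->]]]]]; case/andP: (percP01 _ p xix' xiy' (no_grouped_fractal xiy' k S' (m' * Lk k) ((m' + 1) * Lk k)) p01).
by exists S, m, xix, xiy; split.
Qed.

Lemma v_ge S m : fractal xiy k S -> H xix k m = 1%N ->
  percP p xix xiy (no_fractal xiy k S (m * Lk k) ((m + 1) * Lk k)) <= v_k k p.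
Proof.
move=> hS hm; apply: sup_ge1.
  move=> v [h [S' [m' [xix' [xiy' [F [_ _ _ _ ->]]]]]]].
  by case/andP: (percP01 _ p xix' xiy' (no_fractal xiy' k S' (m' * Lk k) ((m' + 1) * Lk k)) p01).
exists 1%N, S, m, xix, xiy, (fun _ => S); split => //.
- apply: funext => x; apply: propext; split; first by move=> Sx; exists 0%N.
  by case.
Qed.

Lemma ord_am (i0 : int) (n : nat) :
  i0 * L <= (i0 + 1) * L <= (i0 + (n.+2)%:Z) * L.
Proof.
have L0 := Lk_gt0 k.
by apply/andP; split; rewrite ler_pM2r //; lia.
Qed.

Lemma gstep (gA gB gA' : bool) (i0 : int) (n : nat) S c :
  fractal xiy k S -> 0 <= c ->
  (forall w T, fractal xiy k T -> (gB -> grouped k T) ->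
     T `<=` Rk w k S (i0 * L) ((i0 + 1) * L) ->
     ev gA S (i0 * L) ((i0 + (n.+2)%:Z) * L) w ->
     ev gA' T ((i0 + 1) * L) ((i0 + (n.+2)%:Z) * L) w) ->
  (forall T, fractal xiy k T -> (gB -> grouped k T) ->
     percP p xix xiy (ev gA' T ((i0 + 1) * L) ((i0 + (n.+2)%:Z) * L)) <= c) ->
  percP p xix xiy (ev gA S (i0 * L) ((i0 + (n.+2)%:Z) * L)) <=
  percP p xix xiy (ev gB S (i0 * L) ((i0 + 1) * L)) + c.
Proof.
move=> hS c0 himp hc.
have [C [D hR]] := Rows_fractal hS.
have hamb := ord_am i0 n.
apply: (step_lemma _ p xix xiy (Eset (i0 * L) ((i0 + 1) * L) C D)
                               (Eset ((i0 + 1) * L) ((i0 + (n.+2)%:Z) * L) C D)) => //.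
- exact: Eset_cat_uniq.
- apply: (@dep_sub _ (Eset (i0 * L) ((i0 + (n.+2)%:Z) * L) C D)); first exact: ev_dep.
  by move=> e; apply: Eset_split.
- exact: ev_dep.
move=> w1 nB.
have [T [fT gT sT]] : exists T, [/\ fractal xiy k T, gB -> grouped k T &
                                   T `<=` Rk w1 k S (i0 * L) ((i0 + 1) * L)].
  move: nB; rewrite /ev; destruct gB => /= nB; apply: contrapT => hne; apply: nB.
    by move=> [T [f g s]]; apply: hne; exists T; split.
  by move=> [T [f s]]; apply: hne; exists T; split.
exists (ev gA' T ((i0 + 1) * L) ((i0 + (n.+2)%:Z) * L)); split.
- by apply: ev_dep; apply: Rows_sub sT hR.
- exact: hc.
move=> w hag hA; apply: himp hA => //.
by rewrite (Rk_agree hR hag).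
Qed.

Lemma natS2 (n : nat) (x : R) : (n.+2)%:R * x = x + (n.+1)%:R * x.
Proof. by rewrite -[n.+2]add1n natrD mulrDl mul1r. Qed.

Lemma claimG n : forall i0 S, fractal xiy k S ->
  (forall t, (t < n.+1)%N -> H xix k (i0 + t%:Z) = 0%N) ->
  percP p xix xiy (no_grouped_fractal xiy k S (i0 * L) ((i0 + (n.+1)%:Z) * L))
    <= (n.+1)%:R * u_k k p.
Proof.
have [u0 _] := andP u01.
elim: n => [|n IH] i0 S hS hH.
  rewrite mul1r; apply: u_ge => //; have := hH 0%N isT; by rewrite addr0.
have h := @gstep true true true i0 n S ((n.+1)%:R * u_k k p) hS.
apply: le_trans (h _ _ _) _.
- by rewrite mulr_ge0 // ler0n.
- move=> w T fT gT sT hA [T2 [f2 g2 s2]]; apply: hA; exists T2; split => //.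
  have [? ?] := andP (ord_am i0 n).
  by move=> y /s2; apply: (Rk_cat _ _ sT).
- move=> T fT _ /=.
  have -> : i0 + (n.+2)%:Z = (i0 + 1) + (n.+1)%:Z by lia.
  apply: IH => // t ht.
  have -> : i0 + 1 + t%:Z = i0 + (t.+1)%:Z by lia.
  exact: hH.
rewrite natS2 lerD2r /=.
apply: u_ge => //; have := hH 0%N isT; by rewrite addr0.
Qed.

Lemma sum_split n i0 :
  (\sum_(t < n.+1) H xix k (i0 + t%:Z) =
   H xix k i0 + \sum_(t < n) H xix k ((i0 + 1) + t%:Z))%N.
Proof.
rewrite big_ord_recl addr0; congr (_ + _)%N; apply: eq_bigr => t _.
by congr H; rewrite /= /bump /=; lia.
Qed.

Lemma sum0_each n (F : nat -> nat) : (\sum_(t < n) F t = 0)%N ->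
  forall t, (t < n)%N -> F t = 0%N.
Proof.
move=> hs t ht; have := hs; rewrite (bigD1 (Ordinal ht)) //= => /eqP.
by rewrite addn_eq0 => /andP[/eqP].
Qed.

Definition M := Num.max (u_k k p) (v_k k p).

Lemma uM : u_k k p <= M. Proof. by rewrite /M le_max lexx. Qed.
Lemma vM : v_k k p <= M. Proof. by rewrite /M le_max lexx orbT. Qed.
Lemma M0 : 0 <= M.
Proof. by apply: le_trans uM; case/andP: u01. Qed.

Lemma claimI n : forall i0 S, fractal xiy k S ->
  (\sum_(t < n.+1) H xix k (i0 + t%:Z) <= 1)%N ->
  percP p xix xiy (no_fractal xiy k S (i0 * L) ((i0 + (n.+1)%:Z) * L))
    <= (n.+1)%:R * M.
Proof.
have [u0 _] := andP u01.
elim: n => [|n IH] i0 S hS hH.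
  move: hH; rewrite big_ord_recl big_ord0 addn0 addr0 mul1r.
  case hh: (H xix k i0) => [|[|h]] // _.
    have [C [D hR]] := Rows_fractal hS.
    apply: le_trans uM.
    apply: le_trans (u_ge hS hh).
    apply: (@percP_mono _ p xix xiy (Eset (i0 * L) ((i0 + 1) * L) C D)) => //.
    - exact: Eset_uniq.
    - exact: nf_dep.
    - exact: ng_dep.
    by move=> w hA [T [f g s]]; apply: hA; exists T.
  by apply: le_trans vM; apply: v_ge.
move: hH; rewrite sum_split.
case hh: (H xix k i0) => [|[|h]] //= hH.
- have h := @gstep false true false i0 n S ((n.+1)%:R * M) hS.
  apply: le_trans (h _ _ _) _.
  + by rewrite mulr_ge0 // ?ler0n // M0.
  + move=> w T fT gT sT hA [T2 [f2 s2]]; apply: hA; exists T2; split => //.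
    have [? ?] := andP (ord_am i0 n).
    by move=> y /s2; apply: (Rk_cat _ _ sT).
  + move=> T fT _ /=.
    have -> : i0 + (n.+2)%:Z = (i0 + 1) + (n.+1)%:Z by lia.
    by apply: IH.
  rewrite natS2 lerD2r /=.
  by apply: le_trans uM; apply: u_ge.
- have h := @gstep false false true i0 n S ((n.+1)%:R * u_k k p) hS.
  apply: le_trans (h _ _ _) _.
  + by rewrite mulr_ge0 // ler0n.
  + move=> w T fT gT sT hA [T2 [f2 g2 s2]]; apply: hA; exists T2; split => //.
    have [? ?] := andP (ord_am i0 n).
    by move=> y /s2; apply: (Rk_cat _ _ sT).
  + move=> T fT _ /=.
    have -> : i0 + (n.+2)%:Z = (i0 + 1) + (n.+1)%:Z by lia.
    apply: claimG => // t ht.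
    have hs0 : (\sum_(t < n.+1) H xix k (i0 + 1 + t%:Z) = 0)%N.
      by move: hH; rewrite add1n ltnS leqn0 => /eqP.
    exact: (sum0_each (F := fun t => H xix k (i0 + 1 + t%:Z)) hs0).
  rewrite natS2; apply: lerD.
    by apply: le_trans vM; apply: v_ge.
  by rewrite ler_wpM2l ?ler0n // uM.
Qed.

Lemma claimII n i0 S : fractal xiy k S ->
  (\sum_(t < n.+2) H xix k (i0 + t%:Z) <= 1)%N ->
  percP p xix xiy (no_grouped_fractal xiy k S (i0 * L) ((i0 + (n.+2)%:Z) * L))
    <= (n.+2)%:R * M.
Proof.
have [u0 _] := andP u01.
move=> hS; rewrite sum_split.
case hh: (H xix k i0) => [|[|h]] //= hH.
- have h := @gstep true true false i0 n S ((n.+1)%:R * M) hS.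
  apply: le_trans (h _ _ _) _.
  + by rewrite mulr_ge0 // ?ler0n // M0.
  + move=> w T fT gT sT hA [T2 [f2 s2]]; apply: hA; exists T2; split => //.
      have [j0 hj0] := gT isT; exists j0.
      by move=> y /s2; apply: Rk_grouped.
    have [? ?] := andP (ord_am i0 n).
    by move=> y /s2; apply: (Rk_cat _ _ sT).
  + move=> T fT _ /=.
    have -> : i0 + (n.+2)%:Z = (i0 + 1) + (n.+1)%:Z by lia.
    by apply: claimI.
  rewrite natS2 lerD2r /=.
  by apply: le_trans uM; apply: u_ge.
- have h := @gstep true false true i0 n S ((n.+1)%:R * u_k k p) hS.
  apply: le_trans (h _ _ _) _.
  + by rewrite mulr_ge0 // ler0n.
  + move=> w T fT gT sT hA [T2 [f2 g2 s2]]; apply: hA; exists T2; split => //.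
    have [? ?] := andP (ord_am i0 n).
    by move=> y /s2; apply: (Rk_cat _ _ sT).
  + move=> T fT _ /=.
    have -> : i0 + (n.+2)%:Z = (i0 + 1) + (n.+1)%:Z by lia.
    apply: claimG => // t ht.
    have hs0 : (\sum_(t < n.+1) H xix k (i0 + 1 + t%:Z) = 0)%N.
      by move: hH; rewrite add1n ltnS leqn0 => /eqP.
    exact: (sum0_each (F := fun t => H xix k (i0 + 1 + t%:Z)) hs0).
  rewrite natS2; apply: lerD.
    by apply: le_trans vM; apply: v_ge.
  by rewrite ler_wpM2l ?ler0n // uM.
Qed.

End Main.

Unset Implicit Arguments.
End Aux.
Import Aux.

Theorem lemma5p1 (R : realType) (k : nat) (p : R) (xix xiy : int -> nat) :
  0 <= p <= 1 ->
  (forall (i0 i1 j : int), i0 <= i1 -> H xiy k j = 0%N ->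
     (\sum_(t < absz (i1 - i0 + 1)%R) H xix k (i0 + t%:Z)%R <= 1)%N ->
     forall S : set int, fractal xiy k S -> S `<=` Iblock k j ->
       percP p xix xiy (no_fractal xiy k S (i0 * Lk k) ((i1 + 1) * Lk k))
         <= (i1 - i0 + 1)%:~R * Num.max (u_k k p) (v_k k p)) /\
  (forall (i0 i1 : int), 1 <= i1 - i0 ->
     (\sum_(t < absz (i1 - i0 + 1)%R) H xix k (i0 + t%:Z)%R <= 1)%N ->
     forall S : set int, fractal xiy k S ->
       percP p xix xiy (no_grouped_fractal xiy k S (i0 * Lk k) ((i1 + 1) * Lk k))
         <= (i1 - i0 + 1)%:~R * Num.max (u_k k p) (v_k k p)).
Proof.
move=> p01; split.
- move=> i0 i1 j hi _ hsum S hS _.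
  have e1 : i1 - i0 + 1 = ((absz (i1 - i0)%R).+1)%:Z by lia.
  have e2 : i1 + 1 = i0 + ((absz (i1 - i0)%R).+1)%:Z by lia.
  rewrite e1 in hsum *; rewrite e2.
  exact: claimI.
- move=> i0 i1 hi hsum S hS.
  have e1 : i1 - i0 + 1 = ((absz (i1 - i0 - 1)%R).+2)%:Z by lia.
  have e2 : i1 + 1 = i0 + ((absz (i1 - i0 - 1)%R).+2)%:Z by lia.
  rewrite e1 in hsum *; rewrite e2.
  exact: claimII.
Qed.
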